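(* Let $(G,\theta)$ be a $p$-oriented profinite group satisfying formal Hilbert 90. Then for every open subgroup $H\subset G$ and every $n\geq1$, the maps $Z^1(H,S[p^n])\to Z^1(H,S[p^{n-1}])$ and $H^1(H,S[p^n])\to H^1(H,S[p^{n-1}])$ induced by the $G$-module homomorphism $S[p^n]\to S[p^{n-1}]$, $x\mapsto px$, are surjective.
   Context: A $p$-oriented profinite group is a pair $(G,\theta)$ with $G$ profinite and $\theta\colon G\to\mathbb Z_p^\times$ a continuous homomorphism. $\mathbb Z/p^n\mathbb Z(1)$ is $\mathbb Z/p^n\mathbb Z$ with $g\cdot v=\theta(g)v$. $(G,\theta)$ satisfies formal Hilbert 90 if for every open subgroup $H\subset G$ and every $n\geq1$ the reduction map $H^1(H,\mathbb Z/p^n\mathbb Z(1))\to H^1(H,\mathbb Z/p\mathbb Z(1))$ is surjective. $S$ is the discrete $G$-module $\mathbb Q/\mathbb Z_{(p)}$ with $g$ acting by multiplication by $\theta(g)$; $S[p^n]$ is its $p^n$-torsion (isomorphic to $\mathbb Z/p^n\mathbb Z(1)$). $Z^1$ denotes continuous 1-cocycles. *)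

(* Defs.v *)
From HB Require Import structures.
From mathcomp Require Import all_boot all_order all_algebra.
From mathcomp Require Import all_classical all_reals all_analysis.
Set Implicit Arguments. Unset Strict Implicit. Unset Printing Implicit Defensive.
Import Order.TTheory GRing.Theory Num.Theory.
Local Open Scope classical_set_scope.
Local Open Scope ring_scope.

Record profinite_group := ProfiniteGroup {
  pg_car :> topologicalType;
  pg_mul : pg_car -> pg_car -> pg_car;
  pg_inv : pg_car -> pg_car;
  pg_one : pg_car;
  pg_mulA : forall x y z, pg_mul x (pg_mul y z) = pg_mul (pg_mul x y) z;
  pg_mul1g : forall x, pg_mul pg_one x = x;
  pg_mulg1 : forall x, pg_mul x pg_one = x;
  pg_mulVg : forall x, pg_mul (pg_inv x) x = pg_one;
  pg_mulgV : forall x, pg_mul x (pg_inv x) = pg_one;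
  pg_mul_cont : continuous (fun xy : pg_car * pg_car => pg_mul xy.1 xy.2);
  pg_inv_cont : continuous pg_inv;
  pg_compact : compact [set: pg_car];
  pg_hausdorff : hausdorff_space pg_car;
  pg_totdisc : totally_disconnected [set: pg_car]
}.

Definition open_subgroup (G : profinite_group) (H : set G) : Prop :=
  [/\ open H, H (pg_one G),
      (forall x y, H x -> H y -> H (pg_mul x y)) &
      (forall x, H x -> H (pg_inv x))].

(* Z_p as the inverse limit of the Z/p^n Z: an element is a sequence   *)
(* a : nat -> nat with a n < p^n and a (n+1) = a n mod p^n.            *)
(* A p-orientation theta : G -> Z_p^x is a continuous homomorphism:    *)
(* continuity for the inverse-limit topology means every coordinate    *)
(* g |-> theta g n is locally constant.                                *)
Definition is_Zp (p : nat) (a : nat -> nat) : Prop :=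
  forall n, (a n < p ^ n)%N /\ (a n.+1 %% p ^ n = a n)%N.

Definition is_Zp_unit (p : nat) (a : nat -> nat) : Prop :=
  is_Zp p a /\ coprime (a 1%N) p.

Definition p_orientation (p : nat) (G : profinite_group)
    (theta : G -> nat -> nat) : Prop :=
  [/\ forall g, is_Zp_unit p (theta g),
      forall g h n, theta (pg_mul g h) n = (theta g n * theta h n %% p ^ n)%N
    &
      forall n g, exists U : set G, [/\ open U, U g &
                    forall x, U x -> theta x n = theta g n]].

(* Local constancy (= continuity into a discrete module) of a function
   on the subgroup H, for a given equivalence on the values. *)
Definition loc_const_on (G : profinite_group) (H : set G) (T : Type)
    (eqv : T -> T -> Prop) (f : G -> T) : Prop :=
  forall g, H g -> exists U : set G, [/\ open U, U g &
     forall x, U x -> H x -> eqv (f x) (f g)].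

(* Z/p^n Z(1): values are integers taken modulo p^n, g acts by theta g *)
Definition eqmod (m : nat) (a b : int) : Prop := (a == b %[mod m%:Z])%Z.

Definition Z1_mod (p : nat) (G : profinite_group) (theta : G -> nat -> nat)
    (H : set G) (n : nat) (c : G -> int) : Prop :=
  loc_const_on H (eqmod (p ^ n)) c /\
  forall g h, H g -> H h ->
    eqmod (p ^ n) (c (pg_mul g h)) (c g + (theta g n)%:Z * c h).

(* formal Hilbert 90: for every open H and n >= 1,
   H^1(H, Z/p^n(1)) -> H^1(H, Z/p(1)) (induced by reduction mod p)
   is surjective. *)
Definition formal_hilbert90 (p : nat) (G : profinite_group)
    (theta : G -> nat -> nat) : Prop :=
  forall (H : set G) (n : nat), open_subgroup H -> (1 <= n)%N ->
  forall c, Z1_mod p theta H 1 c ->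
  exists c', Z1_mod p theta H n c' /\
    exists b : int, forall g, H g ->
      eqmod p (c' g) (c g + ((theta g 1%N)%:Z * b - b)).

(* S = Q/Z_(p) with g acting by theta g.  Elements of S are rationals  *)
(* with p-power denominator, taken modulo Z.  S[p^n] is its p^n-torsion*)
(* on which theta g acts through its image theta g n in Z/p^n.         *)
Definition eqS (x y : rat) : Prop := (x - y) \is a Num.int.

Definition in_S_tors (p n : nat) (x : rat) : Prop :=
  ((p ^ n)%:R * x) \is a Num.int.

Definition Z1_S (p : nat) (G : profinite_group) (theta : G -> nat -> nat)
    (H : set G) (n : nat) (c : G -> rat) : Prop :=
  [/\ forall g, H g -> in_S_tors p n (c g),
      loc_const_on H eqS c &
      forall g h, H g -> H h ->
        eqS (c (pg_mul g h)) (c g + (theta g n)%:R * c h)].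

(* Main.v *)
Require Import Defs.
From HB Require Import structures.
From mathcomp Require Import all_boot all_order all_algebra.
From mathcomp Require Import all_classical all_reals all_analysis.
From mathcomp Require Import ring.
Import Order.TTheory GRing.Theory Num.Theory.
Local Open Scope classical_set_scope.
Local Open Scope ring_scope.

Lemma dvd_exp (p k N : nat) : (k <= N)%N -> ((p ^ k)%:Z %| (p ^ N)%:Z)%Z.
Proof. by move=> kN; rewrite dvdzE /=; apply: dvdn_exp2l. Qed.

Lemma theta_cong p (G : profinite_group) (theta : G -> nat -> nat) :
  p_orientation p theta -> forall g k N, (k <= N)%N ->
  ((p ^ k)%:Z %| (theta g N)%:Z - (theta g k)%:Z)%Z.
Proof.
move=> [hu _ _] g k N kN; rewrite -eqz_mod_dvd !modz_nat; apply/eqP; congr Posz.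
elim: N kN => [|N IH]; rewrite leq_eqVlt => /orP[/eqP->//|].
  by [].
rewrite ltnS => kN; rewrite -(modn_dvdm _ (dvdn_exp2l p kN)) ((hu g).1 N).2.
exact: IH.
Qed.

Lemma theta_hom p (G : profinite_group) (theta : G -> nat -> nat) :
  p_orientation p theta -> forall g h N,
  ((p ^ N)%:Z %| (theta g N)%:Z * (theta h N)%:Z - (theta (pg_mul g h) N)%:Z)%Z.
Proof.
move=> [_ hm _] g h N; rewrite hm -PoszM -eqz_mod_dvd !modz_nat.
by rewrite modn_mod.
Qed.

Lemma eqS_dvd (P : nat) (i j : int) : (0 < P)%N ->
  eqS (i%:~R / P%:R) (j%:~R / P%:R) <-> (P%:Z %| i - j)%Z.
Proof.
move=> P0; have Pn : (P%:R : rat) != 0 by rewrite pnatr_eq0 -lt0n.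
rewrite /eqS; have -> : (i%:~R / P%:R - j%:~R / P%:R : rat) = (i - j)%:~R / (P%:Z)%:~R.
  by rewrite rmorphB /= mulrBl.
split; last exact: Qint_dvdz.
move=> hint; set x := (_ / _) in hint.
have hx : (numq x)%:~R = x by rewrite numqK.
have : (i - j)%:~R = ((numq x * P%:Z)%:~R : rat).
  by rewrite rmorphM /= hx /x mulrVK // unitfE.
move/intr_inj => ->; exact: dvdz_mull.
Qed.

Definition delta (G : profinite_group) (theta : G -> nat -> nat) (N : nat)
  (u : G -> int) (g h : G) : int :=
  u g + (theta g N)%:Z * u h - u (pg_mul g h).
Arguments delta {G} theta N u g h.

Lemma liftL p (G : profinite_group) (theta : G -> nat -> nat) (H : set G) :
  prime p -> p_orientation p theta -> formal_hilbert90 p theta -> open_subgroup H ->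
  forall k (Z : G -> G -> int) (u : G -> int),
  loc_const_on H (eqmod (p ^ k.+1)) u ->
  (forall g h, H g -> H h ->
     ((p ^ k.+1)%:Z %| delta theta k.+1 u g h - (p ^ k)%:Z * Z g h)%Z) ->
  exists b, loc_const_on H (eqmod p) b /\
    forall g h, H g -> H h -> (p%:Z %| delta theta 1 b g h - Z g h)%Z.
Proof.
move=> pp hor h90 hH; have p0 : (0 < p)%N := prime_gt0 pp.
have pn0 : p%:Z != 0 by rewrite eqz_nat -lt0n.
have hHm : forall x y, H x -> H y -> H (pg_mul x y) by case: hH.
have [_ _ hcont] := hor.
elim=> [|k IH] Z u uc ud.
  exists u; split; first by move: uc; rewrite expn1.
  by move=> g h Hg Hh; move: (ud g h Hg Hh); rewrite expn1 expn0 mul1r.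
have hu1 : Z1_mod p theta H 1 u.
  split.
    move=> g Hg; case: (uc g Hg) => U [oU Ug hU]; exists U; split=> // x Ux Hx.
    move: (hU x Ux Hx); rewrite /eqmod !eqz_mod_dvd; apply: dvdz_trans.
    exact: dvd_exp.
  move=> g h Hg Hh; rewrite /eqmod eqz_mod_dvd.
  have -> : u (pg_mul g h) - (u g + (theta g 1)%:Z * u h) =
    - (delta theta k.+2 u g h - (p ^ k.+1)%:Z * Z g h) - (p ^ k.+1)%:Z * Z g h
    + ((theta g k.+2)%:Z - (theta g 1)%:Z) * u h by rewrite /delta; ring.
  apply: rpredD; [apply: rpredB|].
  - by rewrite rpredN; apply: dvdz_trans (ud g h Hg Hh); apply: dvd_exp.
  - by apply: dvdz_mulr; apply: dvd_exp.
  - by apply: dvdz_mulr; apply: theta_cong.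
have [v [[vc vd] [be hv]]] := h90 H k.+2 hH isT u hu1.
pose w g := u g - v g + ((theta g k.+2)%:Z * be - be).
have wp : forall g, H g -> (p%:Z %| w g)%Z.
  move=> g Hg; have := hv g Hg; rewrite /eqmod eqz_mod_dvd => hv'.
  have -> : w g = - (v g - (u g + ((theta g 1)%:Z * be - be)))
     + ((theta g k.+2)%:Z - (theta g 1)%:Z) * be by rewrite /w; ring.
  apply: rpredD; first by rewrite rpredN.
  by apply: dvdz_mulr; rewrite -(expn1 p); apply: theta_cong.
pose w1 g := (w g %/ p%:Z)%Z.
have ww : forall g, H g -> w g = p%:Z * w1 g.
  by move=> g Hg; rewrite mulrC divzK //; apply: wp.
apply: (IH Z w1).
  move=> g Hg; case: (uc g Hg) => U1 [oU1 U1g hU1].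
  case: (vc g Hg) => U2 [oU2 U2g hU2].
  case: (hcont k.+2 g) => U3 [oU3 U3g hU3].
  exists (U1 `&` U2 `&` U3); split; first by apply: openI => //; apply: openI.
    by split; first split.
  move=> x [[U1x U2x] U3x] Hx; rewrite /eqmod eqz_mod_dvd.
  rewrite -(dvdz_mul2l pn0) -PoszM -expnS mulrBr -!ww //.
  have -> : w x - w g = (u x - u g) - (v x - v g) by rewrite /w (hU3 x U3x); ring.
  apply: rpredB.
    by have := hU1 x U1x Hx; rewrite /eqmod eqz_mod_dvd.
  by have := hU2 x U2x Hx; rewrite /eqmod eqz_mod_dvd.
move=> g h Hg Hh; have Hgh := hHm g h Hg Hh.
have -> : delta theta k.+1 w1 g h - (p ^ k)%:Z * Z g h =
  (delta theta k.+2 w1 g h - (p ^ k)%:Z * Z g h)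
  - ((theta g k.+2)%:Z - (theta g k.+1)%:Z) * w1 h by rewrite /delta; ring.
apply: rpredB; last by apply: dvdz_mulr; apply: theta_cong.
rewrite -(dvdz_mul2l pn0) -PoszM -expnS.
have pk1 : (p ^ k.+1)%:Z = p%:Z * (p ^ k)%:Z by rewrite expnS PoszM.
have -> : p%:Z * (delta theta k.+2 w1 g h - (p ^ k)%:Z * Z g h) =
   (delta theta k.+2 u g h - (p ^ k.+1)%:Z * Z g h)
   + (v (pg_mul g h) - (v g + (theta g k.+2)%:Z * v h))
   + ((theta g k.+2)%:Z * (theta h k.+2)%:Z - (theta (pg_mul g h) k.+2)%:Z) * be.
  transitivity (p%:Z * w1 g + (theta g k.+2)%:Z * (p%:Z * w1 h)
     - p%:Z * w1 (pg_mul g h) - p%:Z * (p ^ k)%:Z * Z g h).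
    by rewrite /delta; ring.
  by rewrite -!ww // pk1 /w /delta; ring.
apply: rpredD; [apply: rpredD|].
- exact: ud.
- by have := vd g h Hg Hh; rewrite /eqmod eqz_mod_dvd.
- by apply: dvdz_mulr; apply: theta_hom.
Qed.

Theorem lemma2p3 (p : nat) (G : profinite_group) (theta : G -> nat -> nat) :
  prime p -> p_orientation p theta -> formal_hilbert90 p theta ->
  forall (H : set G) (n : nat), open_subgroup H -> (1 <= n)%N ->
  (* Z^1(H, S[p^n]) -> Z^1(H, S[p^(n-1)]), x |-> p x, is surjective *)
  (forall c, Z1_S p theta H n.-1 c ->
     exists c', Z1_S p theta H n c' /\
       forall g, H g -> eqS (p%:R * c' g) (c g)) /\
  (* H^1(H, S[p^n]) -> H^1(H, S[p^(n-1)]), x |-> p x, is surjective *)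
  (forall c, Z1_S p theta H n.-1 c ->
     exists c', Z1_S p theta H n c' /\
       exists b : rat, in_S_tors p n.-1 b /\
         forall g, H g ->
           eqS (p%:R * c' g) (c g + ((theta g n.-1)%:R * b - b))).
Proof.
move=> pp hor h90 H [//|m] hH _ /=.
have p0 : (0 < p)%N := prime_gt0 pp.
have pn0 : p%:Z != 0 by rewrite eqz_nat -lt0n.
have pr0 : (p%:R : rat) != 0 by rewrite pnatr_eq0 -lt0n.
have P0 : (0 < p ^ m)%N by rewrite expn_gt0 p0.
have Pr0 : ((p ^ m)%:R : rat) != 0 by rewrite pnatr_eq0 -lt0n.
have P10 : (0 < p ^ m.+1)%N by rewrite expn_gt0 p0.
have P1r0 : ((p ^ m.+1)%:R : rat) != 0 by rewrite pnatr_eq0 -lt0n.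
have hHm : forall x y, H x -> H y -> H (pg_mul x y) by case: hH.
suff main : forall c, Z1_S p theta H m c -> exists c', Z1_S p theta H m.+1 c' /\
       forall g, H g -> eqS (p%:R * c' g) (c g).
  split; first exact: main.
  move=> c hc; have [c' [hc' e]] := main c hc; exists c'; split => //.
  exists 0; split; first by rewrite /in_S_tors mulr0 rpred0.
  by move=> g Hg; rewrite mulr0 subrr addr0; apply: e.
move=> c [ct cc cd].
pose P := (p ^ m)%:Z.
pose a g := numq ((p ^ m)%:R * c g).
have ca : forall g, H g -> c g = (a g)%:~R / (p ^ m)%:R.
  move=> g Hg; rewrite /a numqK ?ct //.
  by rewrite mulrC mulKf.
pose at0 g := ((a g) %% P)%Z.
have hat : forall g, (P %| at0 g - a g)%Z.
  move=> g; have -> : at0 g - a g = - ((a g %/ P)%Z * P).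
    by rewrite /at0 {2}(divz_eq (a g) P); ring.
  by rewrite rpredN dvdz_mull.
have ac : forall g, H g -> exists U : set G, [/\ open U, U g &
     forall x, U x -> H x -> at0 x = at0 g].
  move=> g Hg; case: (cc g Hg) => U [oU Ug hU]; exists U; split=> // x Ux Hx.
  have := hU x Ux Hx; rewrite (ca x Hx) (ca g Hg) eqS_dvd // -eqz_mod_dvd.
  by move/eqP.
have acd : forall g h, H g -> H h -> (P %| delta theta m a g h)%Z.
  move=> g h Hg Hh; have := cd g h Hg Hh.
  have -> : c g + (theta g m)%:R * c h =
     (a g + (theta g m)%:Z * a h)%:~R / (p ^ m)%:R.
    by rewrite (ca g Hg) (ca h Hh) rmorphD rmorphM /= -pmulrn; field.
  rewrite (ca _ (hHm g h Hg Hh)) eqS_dvd // => hd.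
  have -> : delta theta m a g h = - (a (pg_mul g h) - (a g + (theta g m)%:Z * a h)).
    by rewrite /delta; ring.
  by rewrite rpredN.
have atd : forall g h, H g -> H h -> (P %| delta theta m.+1 at0 g h)%Z.
  move=> g h Hg Hh.
  have -> : delta theta m.+1 at0 g h = delta theta m a g h + (at0 g - a g)
     + (theta g m.+1)%:Z * (at0 h - a h) - (at0 (pg_mul g h) - a (pg_mul g h))
     + ((theta g m.+1)%:Z - (theta g m)%:Z) * a h by rewrite /delta; ring.
  apply: rpredD; [apply: rpredB; [apply: rpredD; [apply: rpredD|]|]|].
  - exact: acd.
  - exact: hat.
  - exact/dvdz_mull/hat.
  - exact: hat.
  - by apply: dvdz_mulr; apply: theta_cong.
pose Z g h := (delta theta m.+1 at0 g h %/ P)%Z.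
have hZ : forall g h, H g -> H h -> delta theta m.+1 at0 g h = P * Z g h.
  by move=> g h Hg Hh; rewrite mulrC divzK //; apply: atd.
have [b [bc bd]] : exists b, loc_const_on H (eqmod p) b /\
    forall g h, H g -> H h -> (p%:Z %| delta theta 1 b g h - Z g h)%Z.
  apply: (@liftL p G theta H pp hor h90 hH m Z at0).
    move=> g Hg; case: (ac g Hg) => U [oU Ug hU]; exists U; split=> // x Ux Hx.
    by rewrite /eqmod (hU x Ux Hx) eqxx.
  by move=> g h Hg Hh; rewrite hZ // subrr dvdz0.
pose a' g := at0 g - P * b g.
pose c' g := ((a' g)%:~R / (p ^ m.+1)%:R : rat).
exists c'; split; last first.
  move=> g Hg.
  have -> : p%:R * c' g = (a' g)%:~R / (p ^ m)%:R.
    by rewrite /c' expnS natrM; field; rewrite pr0 Pr0.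
  rewrite (ca g Hg) eqS_dvd // /a'.
  have -> : at0 g - P * b g - a g = (at0 g - a g) - P * b g by ring.
  by apply: rpredB; [apply: hat | apply: dvdz_mulr].
split.
- move=> g Hg; rewrite /in_S_tors /c' mulrC divfK //.
- move=> g Hg; case: (ac g Hg) => U1 [oU1 U1g hU1].
  case: (bc g Hg) => U2 [oU2 U2g hU2].
  exists (U1 `&` U2); split; [exact: openI | by split|].
  move=> x [U1x U2x] Hx; rewrite /c' eqS_dvd // /a' (hU1 x U1x Hx).
  have -> : at0 g - P * b x - (at0 g - P * b g) = - (P * (b x - b g)) by ring.
  rewrite rpredN expnS mulnC PoszM; apply: dvdz_mul; first exact: dvdzz.
  by have := hU2 x U2x Hx; rewrite /eqmod eqz_mod_dvd.
- move=> g h Hg Hh.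
  have -> : c' g + (theta g m.+1)%:R * c' h =
     (a' g + (theta g m.+1)%:Z * a' h)%:~R / (p ^ m.+1)%:R.
    rewrite /c' /= [(a' g + _)%:~R]intrD [(_ * a' h)%:~R]intrM -pmulrn; by field.
  rewrite /c' /= eqS_dvd //.
  have -> : a' (pg_mul g h) - (a' g + (theta g m.+1)%:Z * a' h) =
     P * delta theta m.+1 b g h - delta theta m.+1 at0 g h by rewrite /a' /delta; ring.
  rewrite hZ // -mulrBr expnS mulnC PoszM; apply: dvdz_mul; first exact: dvdzz.
  have -> : delta theta m.+1 b g h - Z g h = (delta theta 1 b g h - Z g h)
     + ((theta g m.+1)%:Z - (theta g 1)%:Z) * b h by rewrite /delta; ring.
  apply: rpredD; first exact: bd.
  by apply: dvdz_mulr; rewrite -(expn1 p); apply: theta_cong.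
Qed.
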